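(* Let $M\ge 2$ and let $0<\gamma_1<\gamma_2<\cdots<\gamma_M$ be real numbers. For $\mathbf{p}=(p_1,\dots,p_M)^T\in\mathbb{R}_{\ge 0}^M$ define $$R_{\mathrm{sum}}(\mathbf{p})=\sum_{i=1}^{M}\log_2\left[1+\frac{p_i\gamma_i}{\sum_{j=i+1}^{M}p_j\gamma_i+1}\right]$$ (an empty sum being $0$). Then $R_{\mathrm{sum}}$ is a strictly concave function of $\mathbf{p}$ on $\mathbb{R}_{\ge 0}^M$.
   Context: This is the sum-rate (over a unit-bandwidth resource block) of an $M$-user downlink power-domain NOMA cluster in which user $i$ has normalized channel power gain $\gamma_i$ (channel gain divided by noise power) and transmit power $p_i$, and successive interference cancellation is performed in ascending order of channel gains: user $i$ cancels the signals of users $1,\dots,i-1$ and treats the signals of users $i+1,\dots,M$ as interference. *)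

(* Defs.v *)
From mathcomp Require Import all_boot all_order all_algebra.
From mathcomp Require Import all_classical all_reals all_analysis.
Set Implicit Arguments. Unset Strict Implicit. Unset Printing Implicit Defensive.
Import Order.TTheory GRing.Theory Num.Theory.
Local Open Scope ring_scope.

Definition log2 {R : realType} (x : R) : R := ln x / ln 2.

(* NOMA sum-rate; indices 0..M-1 (paper: 1..M); the interference sum runs
   over j > i (an empty sum is 0). *)
Definition Rsum {R : realType} (M : nat) (gamma p : 'I_M -> R) : R :=
  \sum_(i < M)
    log2 (1 + p i * gamma i / (\sum_(j < M | (i < j)%N) p j * gamma i + 1)).

Definition strictly_concave_on_nonneg {R : realType} (M : nat)
  (f : ('I_M -> R) -> R) : Prop :=
  forall (p q : 'I_M -> R) (t : R),
    (forall i, 0 <= p i) -> (forall i, 0 <= q i) -> p <> q ->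
    0 < t -> t < 1 ->
    t * f p + (1 - t) * f q < f (fun i => t * p i + (1 - t) * q i).

(* Main.v *)
Require Import Defs.
From mathcomp Require Import all_boot all_order all_algebra.
From mathcomp Require Import all_classical all_reals all_analysis.
From mathcomp Require Import ring lra.
Import Order.TTheory GRing.Theory Num.Theory.
Local Open Scope ring_scope.

Section L.
Variable R : realType.

Lemma ln_le_sub1 (x : R) : 0 < x -> ln x <= x - 1.
Proof.
move=> x0; have := expR_ge1Dx (ln x); rewrite lnK ?posrE //; lra.
Qed.

Lemma ln_lt_sub1 (x : R) : 0 < x -> x != 1 -> ln x < x - 1.
Proof.
move=> x0 x1; have : ln x != 0 by rewrite ln_eq0.
move=> /expR_gt1Dx; rewrite lnK ?posrE //; lra.
Qed.

Lemma ln_conc (A B t : R) : 0 < A -> 0 < B -> 0 < t -> t < 1 -> A != B ->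
  t * ln A + (1 - t) * ln B < ln (t * A + (1 - t) * B).
Proof.
move=> A0 B0 t0 t1 AB.
set C := t * A + (1 - t) * B.
have C0 : 0 < C by rewrite /C; nra.
have AC : A / C != 1.
  apply/eqP => E0.
  have E : A = C by move: E0 => /(congr1 (fun x => x * C)); rewrite divfK ?gt_eqF // mul1r.
  move: AB; rewrite /C in E.
  have : (1 - t) * (A - B) = 0 by lra.
  move/eqP; rewrite mulf_eq0 !subr_eq0; case/orP=> /eqP; [lra| move=> ->; by rewrite eqxx].
have h1 := @ln_lt_sub1 (A / C) (divr_gt0 A0 C0) AC.
have h2 := @ln_le_sub1 (B / C) (divr_gt0 B0 C0).
rewrite !ln_div ?posrE // in h1 h2.
have e : t * (A / C - 1) + (1 - t) * (B / C - 1) = 0.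
  rewrite /C; field; rewrite -/C gt_eqF //.
nra.
Qed.

Lemma ln_conc_le (A B t : R) : 0 < A -> 0 < B -> 0 < t -> t < 1 ->
  t * ln A + (1 - t) * ln B <= ln (t * A + (1 - t) * B).
Proof.
move=> A0 B0 t0 t1; have [->|AB] := eqVneq A B.
  by rewrite -mulrDl -mulrDl subrKC !mul1r.
by apply/ltW/ln_conc.
Qed.

Lemma term_conc (a b x y t : R) : b < a -> 0 <= b -> 0 <= x -> 0 <= y ->
  0 < t -> t < 1 -> x != y ->
  t * (ln (1 + a * x) - ln (1 + b * x)) + (1 - t) * (ln (1 + a * y) - ln (1 + b * y))
  < ln (1 + a * (t * x + (1 - t) * y)) - ln (1 + b * (t * x + (1 - t) * y)).
Proof.
move=> ba b0 x0 y0 t0 t1 xy.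
set z := t * x + (1 - t) * y.
have z0 : 0 <= z by rewrite /z; nra.
have P : forall w, 0 <= w -> 0 < 1 + a * w /\ 0 < 1 + b * w by move=> w w0; split; nra.
have [ax bx] := P x x0; have [ay byy] := P y y0; have [az bz] := P z z0.
rewrite -!ln_div ?posrE //.
set u := fun w => (1 + a * w) / (1 + b * w).
have ux : 0 < u x by apply: divr_gt0.
have uy : 0 < u y by apply: divr_gt0.
have uz : 0 < u z by apply: divr_gt0.
have uxy : u x != u y.
  apply/eqP; rewrite /u /= => E.
  have : (1 + a * x) * (1 + b * y) = (1 + a * y) * (1 + b * x).
    by move: E => /eqP; rewrite eqr_div; [move/eqP|rewrite gt_eqF|rewrite gt_eqF].
  move=> E2; have : (a - b) * (x - y) = 0 by lra.
  move/eqP; rewrite mulf_eq0 !subr_eq0; case/orP => /eqP; [lra|by move/eqP; rewrite (negbTE xy)].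
have conc : t * u x + (1 - t) * u y <= u z.
  rewrite /u.
  have id : (1 + a * z) * (1 + b * x) * (1 + b * y)
     - t * (1 + a * x) * (1 + b * y) * (1 + b * z)
     - (1 - t) * (1 + a * y) * (1 + b * x) * (1 + b * z)
     = t * (1 - t) * (a - b) * b * (x - y) ^+ 2.
    rewrite /z; ring.
  rewrite -subr_ge0.
  have -> : (1 + a * z) / (1 + b * z) - (t * ((1 + a * x) / (1 + b * x)) + (1 - t) * ((1 + a * y) / (1 + b * y)))
     = t * (1 - t) * (a - b) * b * (x - y) ^+ 2 / ((1 + b * x) * (1 + b * y) * (1 + b * z)).
    rewrite -id; field; rewrite !gt_eqF //.
  apply: divr_ge0; last by rewrite !mulr_ge0 // ltW.
  apply: mulr_ge0; last exact: sqr_ge0.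
  rewrite !mulr_ge0 //; lra.
have H := @ln_conc _ _ _ ux uy t0 t1 uxy.
apply: (lt_le_trans H).
rewrite ler_ln ?posrE //; nra.
Qed.

Lemma term_conc_le (a b x y t : R) : b < a -> 0 <= b -> 0 <= x -> 0 <= y ->
  0 < t -> t < 1 ->
  t * (ln (1 + a * x) - ln (1 + b * x)) + (1 - t) * (ln (1 + a * y) - ln (1 + b * y))
  <= ln (1 + a * (t * x + (1 - t) * y)) - ln (1 + b * (t * x + (1 - t) * y)).
Proof.
move=> ba b0 x0 y0 t0 t1; have [->|xy] := eqVneq x y.
  by rewrite -mulrDl -mulrDl subrKC !mul1r.
by apply/ltW/term_conc.
Qed.

Section Main.
Variable n : nat.
Variable gamma : 'I_n.+1 -> R.
Hypothesis gpos : forall i, 0 < gamma i.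

Definition S (p : 'I_n.+1 -> R) (k : nat) := \sum_(j < n.+1 | (k <= j)%N) p j.
Definition bb (k : 'I_n.+1) : R := if val k == 0%N then 0 else gamma (inord k.-1).
Definition phi (k : 'I_n.+1) (x : R) := ln (1 + gamma k * x) - ln (1 + bb k * x).

Lemma S_split p (i : 'I_n.+1) : S p i = p i + S p i.+1.
Proof.
rewrite /S (bigD1 i) //=; congr (_ + _); apply: eq_bigl => j.
by rewrite [(i < j)%N]ltn_neqAle andbC eq_sym.
Qed.

Lemma S_end p : S p n.+1 = 0.
Proof. by rewrite /S big1 // => j; rewrite leqNgt ltn_ord. Qed.

Lemma S_ge0 p k : (forall i, 0 <= p i) -> 0 <= S p k.
Proof. by move=> p0; apply: sumr_ge0 => i _. Qed.

Lemma S_lin p q t k : S (fun i => t * p i + (1 - t) * q i) k = t * S p k + (1 - t) * S q k.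
Proof. by rewrite /S big_split /= -!mulr_sumr. Qed.

Lemma decomp p : (forall i, 0 <= p i) ->
  Rsum gamma p = (\sum_(k < n.+1) phi k (S p k)) / ln 2.
Proof.
move=> p0; rewrite /Rsum /log2 -mulr_suml; congr (_ / _).
have -> : \sum_(i < n.+1) ln (1 + p i * gamma i / (\sum_(j < n.+1 | (i < j)%N) p j * gamma i + 1))
  = \sum_(i < n.+1) (ln (1 + gamma i * S p i) - ln (1 + gamma i * S p i.+1)).
  apply: eq_bigr => i _.
  rewrite -mulr_suml -/(S p i.+1) (S_split p i).
  have g0 := gpos i. 
  have s0 := @S_ge0 p i.+1 p0. have pi0 := p0 i.
  rewrite -ln_div ?posrE; try nra.
  congr ln; field; nra.
rewrite sumrB /phi sumrB; congr (_ - _).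
rewrite big_ord_recr /= S_end mulr0 addr0 ln1 addr0.
rewrite big_ord_recl /= /bb /= mul0r addr0 ln1 add0r.
apply: eq_bigr => i _; rewrite /=.
have -> : inord i = widen_ord (leqnSn n) i by apply: val_inj; rewrite /= inordK // ltnW // ltnS ltn_ord.
by [].
Qed.

Hypothesis gmono : forall i j : 'I_n.+1, (i < j)%N -> gamma i < gamma j.

Lemma bb_ge0 k : 0 <= bb k.
Proof. rewrite /bb; case: ifP => _ //; exact: ltW. Qed.

Lemma bb_lt k : bb k < gamma k.
Proof.
rewrite /bb; case: ifP => [_|/negbT k0]; first exact: gpos.
apply: gmono; rewrite inordK; case: k k0 => [[|m] Hm] //= _; exact: ltnW.
Qed.

End Main.
End L.
Arguments S {R n}.
Arguments bb {R n}.
Arguments phi {R n}.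
Arguments S_split {R n}.
Arguments S_end {R n}.
Arguments S_ge0 {R n}.
Arguments S_lin {R n}.
Arguments term_conc {R}.
Arguments term_conc_le {R}.
Arguments bb_lt {R n gamma}.
Arguments bb_ge0 {R n gamma}.

Theorem lemma1 (R : realType) (M : nat) (gamma : 'I_M -> R) :
  (2 <= M)%N ->
  (forall i, 0 < gamma i) ->
  (forall i j : 'I_M, (i < j)%N -> gamma i < gamma j) ->
  strictly_concave_on_nonneg (Rsum gamma).
Proof.
move=> hM; case: M gamma hM => [//|n] gamma _ gpos gmono.
move=> p q t p0 q0 pq t0 t1.
have r0 : forall i, 0 <= t * p i + (1 - t) * q i.
  by move=> i; have := p0 i; have := q0 i; nra.
rewrite !(@decomp R n gamma gpos) //.
have l0 : 0 < ln (2 : R) by apply: ln_gt0; lra.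
rewrite !mulrA -mulrDl ltr_pM2r ?invr_gt0 //.
rewrite !mulr_sumr -big_split /=.
have [k0 Hk0] : exists k : 'I_n.+1, S p k != S q k.
  have [i Hi] : exists i, p i != q i.
    case: (pselect (exists i, p i != q i)) => // H; exfalso; apply: pq.
    apply: funext => i; apply/eqP; apply/negPn/negP => Hi; apply: H; by exists i.
  have [Hs|Hs] := eqVneq (S p i) (S q i); last by exists i.
  have Hs1 : S p i.+1 != S q i.+1.
    apply/eqP => E; move: Hs; rewrite !S_split E => E2.
    have E3 : p i = q i by apply: (addIr (S q i.+1)).
    idtac.
    by move: Hi; rewrite E3 eqxx.
  have iln : (i < n)%N.
    rewrite ltn_neqAle -ltnS ltn_ord andbT; apply/eqP => E.
    by move: Hs1; rewrite E !S_end eqxx.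
  exists (inord i.+1); rewrite inordK //.
rewrite (bigD1 k0) //= [X in _ < X](bigD1 k0) //=.
apply: ltr_leD.
  rewrite /phi S_lin; apply: term_conc => //; [exact: bb_lt|exact: bb_ge0|exact: S_ge0|exact: S_ge0].
apply: ler_sum => k _.
rewrite /phi S_lin; apply: term_conc_le => //; [exact: bb_lt|exact: bb_ge0|exact: S_ge0|exact: S_ge0].
Qed.
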